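(* Let $\mathcal{X}$ be a finite alphabet and let $P_0,P_1$ be probability mass functions on $\mathcal{X}$ with the same support $\mathcal{X}$. Let $n>1$, let $k^\star\in(1,n]$ be an integer, and let $\mathcal{D}=(x_1,\dots,x_n)$ be a random dataset with independent entries such that $x_1,\dots,x_{k^\star-1}\sim P_0$ and $x_{k^\star},\dots,x_n\sim P_1$. Consider the estimator $$\hat k\in\arg\max_{k\in[n]} l(\mathcal{D},k),\qquad l(\mathcal{D},k)=\sum_{i=k}^{n}\log\frac{P_1(x_i)}{P_0(x_i)}.$$ Let $s=D^{J}_{\infty}(P_0,P_1)=\max_{x\in\mathcal{X}}\log\frac{P_1(x)}{P_0(x)}-\min_{x\in\mathcal{X}}\log\frac{P_1(x)}{P_0(x)}$ and $C=\min\{D_{\mathrm{KL}}(P_0\|P_1),D_{\mathrm{KL}}(P_1\|P_0)\}$. Then for every $\alpha\in[n]$, the estimator is $(\alpha,\beta)$-accurate with $$\beta\le 2\min\Bigg\{\sum_{i=1}^{i^*}\exp\Big(\frac{-2^{i-1}\alpha C^2}{s^2}\Big);\ \exp\big(-\alpha I_{ch}(P_0,P_1)\big)\Bigg\},$$ where $i^*=\lceil\log_2\big(\frac{n-1}{\alpha}\big)\rceil$; that is, $\mathbb{P}\{\hat k\notin[k^\star-\alpha,k^\star+\alpha]\}$ is at most the right-hand side.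
   Context: $[a]=\{1,\dots,a\}$. All logarithms are natural. An estimator $\hat k$ of the change-point $k^\star$ is $(\alpha,\beta)$-accurate if $\mathbb{P}\{\hat k\notin[k^\star-\alpha,k^\star+\alpha]\}=\beta$. Chernoff information: $I_{ch}(P_0,P_1)=-\min_{\lambda\in(0,1)}\log\big(\sum_{x}P_0(x)^\lambda P_1(x)^{1-\lambda}\big)$. $D_\infty(P\|Q)=\log\max_x \frac{P(x)}{Q(x)}$ and $D^J_\infty(P,Q)=D_\infty(P\|Q)+D_\infty(Q\|P)$. *)

(* Defs.v *)
From HB Require Import structures.
From mathcomp Require Import all_boot all_order all_algebra.
From mathcomp Require Import all_classical all_reals all_analysis.
Set Implicit Arguments. Unset Strict Implicit. Unset Printing Implicit Defensive.
Import Order.TTheory GRing.Theory Num.Theory.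
Local Open Scope ring_scope.
Local Open Scope classical_set_scope.

Section Defs.
Variables (R : realType) (X : finType).

Definition KL (P Q : X -> R) : R := \sum_(x : X) P x * ln (P x / Q x).

(* D_oo(P || Q) = log max_x P(x)/Q(x)  (ratios are positive, so 0 is a
   neutral start for the max). *)
Definition Dinf (P Q : X -> R) : R := ln (\big[Num.max/0]_(x : X) (P x / Q x)).

Definition DJinf (P Q : X -> R) : R := Dinf P Q + Dinf Q P.

(* Chernoff information: - min_{lam in (0,1)} log sum_x P0^lam P1^(1-lam),
   written as the sup of the negated quantity (the min is attained). *)
Definition chernoff_info (P0 P1 : X -> R) : R :=
  sup [set - ln (\sum_(x : X) (P0 x `^ lam) * (P1 x `^ (1 - lam))) | lam in `]0, 1[].

(* Log-likelihood statistic l(D,k) = sum_{i=k}^n log(P1(x_i)/P0(x_i)),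
   with data D : 'I_n -> X, entry i : 'I_n being x_{i+1}. *)
Definition llr (P0 P1 : X -> R) (n : nat) (D : {ffun 'I_n -> X}) (k : nat) : R :=
  \sum_(i < n | (k <= i.+1)%N) ln (P1 (D i) / P0 (D i)).

Definition data_prob (P0 P1 : X -> R) (n kstar : nat) (D : {ffun 'I_n -> X}) : R :=
  \prod_(i < n) (if (i.+1 < kstar)%N then P0 (D i) else P1 (D i)).

Definition prob_event (P0 P1 : X -> R) (n kstar : nat) (E : pred {ffun 'I_n -> X}) : R :=
  \sum_(D in E) data_prob P0 P1 kstar D.

End Defs.

(* Main.v *)
Require Import Defs.
From HB Require Import structures.
From mathcomp Require Import all_boot all_order all_algebra.
From mathcomp Require Import all_classical all_reals all_analysis.
From mathcomp Require Import lra ring zify.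
Set Implicit Arguments. Unset Strict Implicit. Unset Printing Implicit Defensive.
Import Order.TTheory GRing.Theory Num.Theory.
Local Open Scope ring_scope.

Lemma mono_der (R : realType) (f df : R -> R) (Hd : forall x : R, is_derive x 1 f (df x)) (a b : R) :
  a <= b -> (forall x, a < x < b -> 0 <= df x) -> f a <= f b.
Proof.
move=> ab H.
have dv : forall x : R, derivable f x 1 by move=> x; exact: ex_derive.
apply: (@ger0_derive1_le_cc R f a b).
- by move=> x _; exact: dv.
- move=> x; rewrite in_itv /= => hx.
  by rewrite derive1E derive_val; apply: H.
- by apply: derivable_within_continuous => x _; exact: dv.
- by rewrite in_itv /= lexx ab.
- by rewrite in_itv /= lexx ab.
- exact: ab.
Qed.

Section Core.
Variable R : realType.
Variable p : R.
Hypothesis p01 : 0 <= p <= 1.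

Definition Dn (h : R) := 1 - p + p * expR h.

Lemma Dn_gt0 h : 0 < Dn h.
Proof.
rewrite /Dn; case/andP: p01 => p0 p1.
have e := expR_gt0 h.
have [->|pn0] := eqVneq p 0; first by rewrite subr0 mul0r addr0.
have pp : 0 < p by rewrite lt_def pn0 p0.
have := mulr_gt0 pp e; lra.
Qed.

Lemma Dn_der (x : R) : is_derive x 1 Dn (p * expR x).
Proof.
have -> : Dn = (cst (1 - p)) + (fun h => p * expR h).
  by apply/funext => h; rewrite /Dn.
apply: is_derive_eq.
by rewrite add0r.
Qed.

Definition F1 (h : R) := h / 4 + p - p * expR h * (Dn h)^-1.
Definition phi (h : R) := p * h + h ^+ 2 / 8 - ln (Dn h).

Lemma F1_der (x : R) : is_derive x 1 F1 (1/4 - p * expR x * (1 - p) / (Dn x) ^+ 2).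
Proof.
have Dx := Dn_gt0 x.
have H1 : is_derive x 1 (fun h => (Dn h)^-1) (- (Dn x) ^- 2 *: (p * expR x)).
  by apply: is_deriveV; [rewrite gt_eqF | exact: Dn_der].
have H2 := @is_deriveM R R id (cst (4^-1)) x 1 1 0 (is_derive_id _ _) (is_derive_cst _ _ _).
have H0 : is_derive x 1 (fun h : R => p * expR h) (p * expR x) by apply: is_derive_eq.
have H3 := @is_deriveM R R (fun h => p * expR h) (fun h => (Dn h)^-1) x 1 _ _ H0 H1.
have H4 := is_deriveD H2 (@is_derive_cst R R R p x 1).
have H5 := is_deriveB H4 H3.
have -> : F1 = (id * cst 4^-1 + cst p) - (fun h => p * expR h) * (fun h => (Dn h)^-1).
  by apply/funext => h.
apply: is_derive_eq.
rewrite /= scaler0 add0r addr0.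
have sE : forall a b : R, a *: b = a * b by [].
rewrite !sE.
have Dn0 : Dn x != 0 by rewrite gt_eqF.
move: Dn0; rewrite /Dn => Dn0.
by field.
Qed.

Lemma phi_der (x : R) : is_derive x 1 phi (F1 x).
Proof.
have Dx := Dn_gt0 x.
have sE : forall a b : R, a *: b = a * b by [].
have H1 := @is_deriveM R R (cst p) id x 1 0 1 (is_derive_cst _ _ _) (is_derive_id _ _).
have H2 := @is_deriveX R R id 2 x 1 1 (is_derive_id _ _).
have H3 := @is_deriveM R R (id ^+ 2) (cst 8^-1) x 1 _ 0 H2 (is_derive_cst _ _ _).
have H4 := @is_derive1_comp R (@ln R) Dn x _ _ (is_derive1_ln Dx) (Dn_der x).
have H5 := is_deriveB (is_deriveD H1 H3) H4.
have -> : phi = (cst p * id + id ^+ 2 * cst 8^-1) - (@ln R \o Dn).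
  by apply/funext => h; rewrite /phi /= expr2.
apply: is_derive_eq.
rewrite /= !sE /F1 expr1.
have Dn0 : Dn x != 0 by rewrite gt_eqF.
by field.
Qed.

Lemma F1'_ge0 (x : R) : 0 <= 1/4 - p * expR x * (1 - p) / (Dn x) ^+ 2.
Proof.
have Dx := Dn_gt0 x.
have D2 : 0 < Dn x ^+ 2 by rewrite exprn_gt0.
rewrite subr_ge0 ler_pdivrMr // -subr_ge0.
have -> : 1 / 4 * Dn x ^+ 2 - p * expR x * (1 - p) = (1 - p - p * expR x)^+2 / 4.
  by rewrite /Dn; field.
by rewrite divr_ge0 // sqr_ge0.
Qed.

Lemma F1_0 : F1 0 = 0.
Proof. by rewrite /F1 /Dn expR0 mul0r mulr1 add0r subrK invr1 mulr1 subrr. Qed.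

Lemma phi_0 : phi 0 = 0.
Proof.
by rewrite /phi /Dn expR0 mulr0 expr0n /= mul0r addr0 mulr1 subrK ln1 subrr.
Qed.

Lemma F1_ge0 h : 0 <= h -> 0 <= F1 h.
Proof.
move=> h0; rewrite -F1_0; apply: (mono_der F1_der h0) => y _; exact: F1'_ge0.
Qed.

Lemma F1_le0 h : h <= 0 -> F1 h <= 0.
Proof.
move=> h0; rewrite -F1_0; apply: (mono_der F1_der h0) => y _; exact: F1'_ge0.
Qed.

Lemma phi_ge0 h : 0 <= phi h.
Proof.
have [h0|h0] := leP 0 h.
  rewrite -phi_0; apply: (mono_der phi_der h0) => y /andP[y0 _].
  by apply: F1_ge0; rewrite ltW.
have -> : phi h = - ((fun x => - phi x) h) by rewrite /= opprK.
rewrite oppr_ge0 -[X in _ <= X]oppr0 -phi_0.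
have Hd : forall x : R, is_derive x 1 (fun x => - phi x) (- F1 x).
  move=> x; exact: is_deriveN (phi_der x).
apply: (mono_der Hd (ltW h0)) => y /andP[_ y0].
by rewrite oppr_ge0; apply: F1_le0; rewrite ltW.
Qed.

End Core.

Lemma hoeff_core (R : realType) (p h : R) : 0 <= p <= 1 ->
  1 - p + p * expR h <= expR (p * h + h ^+ 2 / 8).
Proof.
move=> p01; have := phi_ge0 p01 h; rewrite /phi subr_ge0.
rewrite -ler_expR lnK //; rewrite posrE; exact: Dn_gt0.
Qed.

Lemma eq_leR (R : realType) (x y : R) : x = y -> x <= y.
Proof. by move=> ->. Qed.

Lemma expR_conv (R : realType) (l u v : R) : 0 <= l <= 1 ->
  expR (l * u + (1 - l) * v) <= l * expR u + (1 - l) * expR v.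
Proof.
case/andP=> l0 l1.
set m := l * u + (1 - l) * v.
have Eu : expR u = expR m * expR (u - m) by rewrite -expRD addrC subrK.
have Ev : expR v = expR v by [].
have Ev' : expR v = expR m * expR (v - m) by rewrite -expRD addrC subrK.
have hu := expR_ge1Dx (u - m).
have hv := expR_ge1Dx (v - m).
have em := expR_gt0 m.
rewrite Eu Ev'.
have h1 : l * (expR m * (1 + (u - m))) <= l * (expR m * expR (u - m)).
  by rewrite ler_wpM2l // ler_wpM2l // ltW.
have h2 : (1 - l) * (expR m * (1 + (v - m))) <= (1 - l) * (expR m * expR (v - m)).
  by rewrite ler_wpM2l ?subr_ge0 // ler_wpM2l // ltW.
apply: (le_trans _ (lerD h1 h2)); rewrite [X in _ <= X](_ : _ = expR m) // /m; ring.
Qed.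

Lemma hoeffding (R : realType) (X : finType) (Q f : X -> R) (a b t : R) :
  (forall x, 0 <= Q x) -> \sum_x Q x = 1 -> (forall x, a <= f x <= b) -> a < b ->
  \sum_x Q x * expR (t * f x) <= expR (t * (\sum_x Q x * f x) + t ^+ 2 * (b - a) ^+ 2 / 8).
Proof.
move=> Q0 Q1 fab ab.
have ba0 : b - a != 0 by rewrite subr_eq0 gt_eqF.
set K := (expR (t * b) - expR (t * a)) / (b - a).
have pt : forall x, Q x * expR (t * f x) <= Q x * (expR (t * a) + (f x - a) * K).
  move=> x; apply: ler_wpM2l => //.
  have /andP[fa fb] := fab x.
  set l := (b - f x) / (b - a).
  have l01 : 0 <= l <= 1.
    rewrite /l divr_ge0 ?subr_ge0 ?(ltW ab) //= ler_pdivrMr ?subr_gt0 // mul1r.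
    by rewrite lerD2l lerN2.
  have := expR_conv (t * a) (t * b) l01.
  have -> : l * (t * a) + (1 - l) * (t * b) = t * f x by rewrite /l; field; exact: ba0.
  move=> H; apply: (le_trans H); apply: eq_leR; rewrite /l /K; field; exact: ba0.
apply: (le_trans (ler_sum _ (fun x _ => pt x))).
have -> : \sum_x Q x * (expR (t * a) + (f x - a) * K) =
   expR (t * a) * \sum_x Q x + K * \sum_x Q x * f x - K * a * \sum_x Q x.
  rewrite !mulr_sumr -!big_split /= -sumrB; apply: eq_bigr => x _; ring.
rewrite Q1 !mulr1.
set mu := \sum_x Q x * f x.
set p := (mu - a) / (b - a).
have p01 : 0 <= p <= 1.
  have Hm : a <= mu <= b.
    apply/andP; split.
      rewrite -[a]mulr1 -Q1 mulr_sumr /mu; apply: ler_sum => x _.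
      by rewrite mulrC ler_wpM2l // (andP (fab x)).1.
    rewrite -[b]mulr1 -Q1 mulr_sumr /mu; apply: ler_sum => x _.
    by rewrite [b * _]mulrC ler_wpM2l // (andP (fab x)).2.
  case/andP: Hm => h1 h2.
  rewrite /p divr_ge0 ?subr_ge0 ?(ltW ab) //= ler_pdivrMr ?subr_gt0 // mul1r.
  by rewrite lerD2r.
have := hoeff_core (t * (b - a)) p01.
move=> H.
have E1 : expR (t * a) + K * mu - K * a = expR (t * a) * (1 - p + p * expR (t * (b - a))).
  rewrite /K; have -> : expR (t * b) = expR (t * a) * expR (t * (b - a)) by rewrite -expRD; congr expR; ring.
  rewrite /p.
  by field.
rewrite E1.
have -> : t * mu + t ^+ 2 * (b - a) ^+ 2 / 8 = t * a + (p * (t * (b - a)) + (t * (b - a)) ^+ 2 / 8).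
  rewrite /p; by field.
rewrite expRD; apply: ler_wpM2l => //; exact: ltW (expR_gt0 _).
Qed.

Section Ville.
Variables (R : realType) (X : finType).

Definition fins (n : nat) (i0 : 'I_n.+1) (x : X) (D : {ffun 'I_n -> X}) : {ffun 'I_n.+1 -> X} :=
  [ffun i => if unlift i0 i is Some j then D j else x].

Lemma fins_i0 n (i0 : 'I_n.+1) x D : fins i0 x D i0 = x.
Proof. by rewrite /fins ffunE unlift_none. Qed.

Lemma fins_lift n (i0 : 'I_n.+1) x D j : fins i0 x D (lift i0 j) = D j.
Proof. by rewrite /fins ffunE liftK. Qed.

Lemma sum_split n (i0 : 'I_n.+1) (F : {ffun 'I_n.+1 -> X} -> R) :
  \sum_D F D = \sum_x \sum_(D : {ffun 'I_n -> X}) F (fins i0 x D).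
Proof.
rewrite pair_bigA /=.
rewrite (reindex (fun p : X * {ffun 'I_n -> X} => fins i0 p.1 p.2)) //.
apply: onW_bij.
exists (fun D : {ffun 'I_n.+1 -> X} => (D i0, [ffun j => D (lift i0 j)])).
  case=> x D /=; rewrite fins_i0; congr pair; apply/ffunP => j.
  by rewrite ffunE fins_lift.
move=> D /=; apply/ffunP => i; rewrite /fins ffunE.
by case: unliftP => [j ->|->]; rewrite ?ffunE.
Qed.

Lemma mass1 n (w : 'I_n -> X -> R) : (forall i, \sum_x w i x = 1) ->
  \sum_(D : {ffun 'I_n -> X}) \prod_i w i (D i) = 1.
Proof.
move=> H; rewrite -bigA_distr_bigA /=.
by rewrite big1 // => i _; apply: H.
Qed.

Lemma prod_recl_lt n (F : 'I_n.+1 -> R) (m : nat) :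
  \prod_(i < n.+1 | (i < m)%N) F i =
  (if (0 < m)%N then F ord0 else 1) * \prod_(j < n | (j < m.-1)%N) F (lift ord0 j).
Proof.
rewrite big_mkcond big_ord_recl /=; congr (_ * _).
rewrite [RHS]big_mkcond; apply: eq_bigr => j _ /=.
by case: m => [|m] //=; rewrite /bump leq0n. 
Qed.

Lemma prod_recr_ge n (F : 'I_n.+1 -> R) (m : nat) :
  \prod_(i < n.+1 | (m <= i)%N) F i =
  (if (m <= n)%N then F ord_max else 1) * \prod_(j < n | (m <= j)%N) F (lift ord_max j).
Proof.
rewrite big_mkcond (bigD1_ord ord_max) //=; congr (_ * _).
rewrite [RHS]big_mkcond; apply: eq_bigr => j _ /=.
by rewrite /bump (leqNgt n j) ltn_ord.
Qed.


Lemma sum_ind_le n (w : 'I_n -> X -> R) (I : {ffun 'I_n -> X} -> R) (K : R) :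
  (forall i x, 0 <= w i x) -> (forall i, \sum_x w i x = 1) -> (forall D, I D <= K) ->
  \sum_(D : {ffun 'I_n -> X}) (\prod_i w i (D i)) * I D <= K.
Proof.
move=> w0 w1 IK.
apply: (@le_trans _ _ (\sum_(D : {ffun 'I_n -> X}) (\prod_i w i (D i)) * K)).
  apply: ler_sum => D _; apply: ler_wpM2l => //; apply: prodr_ge0 => i _; exact: w0.
by rewrite -mulr_suml mass1 // mul1r.
Qed.

Lemma ville_pre n : forall (w g : 'I_n -> X -> R) (y c : R),
  (forall i x, 0 <= w i x) -> (forall i, \sum_x w i x = 1) ->
  (forall i x, 0 <= g i x) -> (forall i, \sum_x w i x * g i x <= 1) ->
  0 < c -> 0 <= y ->
  \sum_(D : {ffun 'I_n -> X}) (\prod_i w i (D i)) *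
     ([exists m : 'I_n.+1, c <= y * \prod_(i < n | (i < m)%N) g i (D i)] : bool)%:R <= y / c.
Proof.
elim: n => [|n IH] w g y c w0 w1 g0 g1 c0 y0.
  apply: sum_ind_le => // D.
  case: existsP => [[m]|_]; last by rewrite divr_ge0 // ltW.
  by rewrite big_ord0 mulr1 => cy; rewrite ler_pdivlMr // mul1r.
have [cy|ncy] := leP c y.
  apply: sum_ind_le => // D.
  by apply: (@le_trans _ _ 1); [case: existsP | rewrite ler_pdivlMr // mul1r].
rewrite (sum_split ord0).
set w' := fun (j : 'I_n) => w (lift ord0 j).
set g' := fun (j : 'I_n) => g (lift ord0 j).
apply: (@le_trans _ _ (\sum_x w ord0 x * ((y * g ord0 x) / c))).
  apply: ler_sum => x _.
  have IHx := IH w' g' (y * g ord0 x) c (fun i => w0 _) (fun i => w1 _) (fun i => g0 _) (fun i => g1 _) c0 (mulr_ge0 y0 (g0 _ _)).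
  apply: (le_trans _ (ler_wpM2l (w0 ord0 x) IHx)).
  rewrite mulr_sumr; apply: ler_sum => D _.
  rewrite big_ord_recl fins_i0 -mulrA; apply: ler_wpM2l => //.
  have -> : \prod_(i < n) w (lift ord0 i) (fins ord0 x D (lift ord0 i)) = \prod_i w' i (D i).
    by apply: eq_bigr => i _; rewrite fins_lift.
  apply: ler_wpM2l; first by apply: prodr_ge0 => i _; exact: w0.
  case: existsP => [[m]|_]; last by [].
  rewrite prod_recl_lt fins_i0.
  have -> : \prod_(j < n | (j < m.-1)%N) g (lift ord0 j) (fins ord0 x D (lift ord0 j)) =
            \prod_(j < n | (j < m.-1)%N) g' j (D j).
    by apply: eq_bigr => j _; rewrite fins_lift.
  case: m => [[|m] hm] /=.
    rewrite mul1r big_pred0 ?mulr1 => [cy|j]; last by [].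
    by move: ncy; rewrite ltNge cy.
  move=> H; have hm' : (m < n.+1)%N by [].
  have -> : ([exists m0 : 'I_n.+1, c <= y * g ord0 x * \prod_(i < n | (i < m0)%N) g' i (D i)] : bool) = true.
    apply/existsP; exists (Ordinal hm'); by rewrite /= -mulrA.
  by [].
have -> : \sum_x w ord0 x * (y * g ord0 x / c) = y / c * \sum_x w ord0 x * g ord0 x.
  by rewrite mulr_sumr; apply: eq_bigr => x _; ring.
rewrite -[X in _ <= X]mulr1; apply: ler_wpM2l => //; by rewrite divr_ge0 // ltW.
Qed.

Lemma ville_suf n : forall (w g : 'I_n -> X -> R) (y c : R),
  (forall i x, 0 <= w i x) -> (forall i, \sum_x w i x = 1) ->
  (forall i x, 0 <= g i x) -> (forall i, \sum_x w i x * g i x <= 1) ->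
  0 < c -> 0 <= y ->
  \sum_(D : {ffun 'I_n -> X}) (\prod_i w i (D i)) *
     ([exists m : 'I_n.+1, c <= y * \prod_(i < n | (m <= i)%N) g i (D i)] : bool)%:R <= y / c.
Proof.
elim: n => [|n IH] w g y c w0 w1 g0 g1 c0 y0.
  apply: sum_ind_le => // D.
  case: existsP => [[m]|_]; last by rewrite divr_ge0 // ltW.
  by rewrite big_ord0 mulr1 => cy; rewrite ler_pdivlMr // mul1r.
have [cy|ncy] := leP c y.
  apply: sum_ind_le => // D.
  by apply: (@le_trans _ _ 1); [case: existsP | rewrite ler_pdivlMr // mul1r].
rewrite (sum_split ord_max).
set w' := fun (j : 'I_n) => w (lift ord_max j).
set g' := fun (j : 'I_n) => g (lift ord_max j).
apply: (@le_trans _ _ (\sum_x w ord_max x * ((y * g ord_max x) / c))).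
  apply: ler_sum => x _.
  have IHx := IH w' g' (y * g ord_max x) c (fun i => w0 _) (fun i => w1 _) (fun i => g0 _) (fun i => g1 _) c0 (mulr_ge0 y0 (g0 _ _)).
  apply: (le_trans _ (ler_wpM2l (w0 ord_max x) IHx)).
  rewrite mulr_sumr; apply: ler_sum => D _.
  rewrite (bigD1_ord ord_max) //= fins_i0 -mulrA; apply: ler_wpM2l => //.
  have -> : \prod_(i < n) w (lift ord_max i) (fins ord_max x D (lift ord_max i)) = \prod_i w' i (D i).
    by apply: eq_bigr => i _; rewrite fins_lift.
  apply: ler_wpM2l; first by apply: prodr_ge0 => i _; exact: w0.
  case: existsP => [[m]|_]; last by [].
  rewrite prod_recr_ge fins_i0.
  have -> : \prod_(j < n | (m <= j)%N) g (lift ord_max j) (fins ord_max x D (lift ord_max j)) =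
            \prod_(j < n | (m <= j)%N) g' j (D j).
    by apply: eq_bigr => j _; rewrite fins_lift.
  case: m => m hm /=.
  case: (leqP m n) => hmn.
    move=> H; have hm' : (m < n.+1)%N by [].
    have -> : ([exists m0 : 'I_n.+1, c <= y * g ord_max x * \prod_(i < n | (m0 <= i)%N) g' i (D i)] : bool) = true.
      apply/existsP; exists (Ordinal hm'); by rewrite /= -mulrA.
    by [].
  rewrite mul1r big_pred0 ?mulr1 => [cy|j].
    by move: ncy; rewrite ltNge cy.
  by apply/negbTE; rewrite -ltnNge (leq_trans (ltn_ord j)) // ltnW.
have -> : \sum_x w ord_max x * (y * g ord_max x / c) = y / c * \sum_x w ord_max x * g ord_max x.
  by rewrite mulr_sumr; apply: eq_bigr => x _; ring.
rewrite -[X in _ <= X]mulr1; apply: ler_wpM2l => //; by rewrite divr_ge0 // ltW.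
Qed.
End Ville.
Lemma ind_le (R : realType) (b1 b2 : bool) : (b1 -> b2) -> (b1%:R : R) <= b2%:R.
Proof. by case: b1; case: b2 => // /(_ isT). Qed.

Lemma prod_window (R : realType) (r : R) (a b n : nat) :
  \prod_(i < n | (a <= i < b)%N) r = r ^+ (minn b n - a).
Proof.
elim: n => [|n IH]; first by rewrite big_ord0 (minnC b 0) min0n sub0n expr0.
rewrite big_mkcond big_ord_recr /= -big_mkcond IH.
case: ifP => h.
  have -> : (minn b n.+1 - a = (minn b n - a).+1)%N.
    by move/andP: h => [h1 h2]; lia.
  by rewrite exprSr.
have -> : (minn b n.+1 - a = minn b n - a)%N.
  by move/negbT: h; rewrite negb_and -!ltnNge => /orP[h|h]; lia.
by rewrite mulr1.
Qed.

Lemma win_ge (R : realType) (n : nat) (F : 'I_n -> R) (rho : R) (a b alpha : nat) :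
  0 < rho <= 1 -> (b <= n)%N -> (a + alpha.+1 <= b)%N ->
  0 <= \sum_(i < n | (a <= i < b)%N) F i ->
  (rho ^+ alpha.+1)^-1 <= \prod_(i < n | (a <= i < b)%N) (expR (F i) / rho).
Proof.
case/andP=> r0 r1 bn ab S0.
rewrite big_split /= -expR_sum prod_window.
have -> : minn b n = b by apply/minn_idPl.
rewrite -exprVn.
have ri : 1 <= rho^-1 by rewrite invf_ge1.
apply: (@le_trans _ _ (rho^-1 ^+ (b - a))).
  by apply: ler_weXn2l => //; lia.
apply: ler_peMl; first by rewrite exprn_ge0 // ltW // (lt_le_trans ltr01 ri).
by rewrite -expR0 ler_expR.
Qed.

Section Main.
Variables (R : realType) (X : finType) (P0 P1 : X -> R).
Hypotheses (P0pos : forall x, 0 < P0 x) (P1pos : forall x, 0 < P1 x)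
  (P0sum : \sum_(x : X) P0 x = 1) (P1sum : \sum_(x : X) P1 x = 1).
Variables (n kstar alpha : nat).
Hypotheses (hk : (1 < kstar <= n)%N).
Variable (khat : {ffun 'I_n -> X} -> nat).
Hypotheses (khat_range : forall D, (1 <= khat D <= n)%N)
  (khat_argmax : forall D (k : nat), (1 <= k <= n)%N ->
      llr P0 P1 D k <= llr P0 P1 D (khat D)).

Definition Y (x : X) := ln (P1 x / P0 x).
Definition w (i : 'I_n) (x : X) := if (i.+1 < kstar)%N then P0 x else P1 x.

Lemma w_ge0 i x : 0 <= w i x.
Proof. by rewrite /w; case: ifP => _; apply: ltW. Qed.

Lemma w_sum i : \sum_x w i x = 1.
Proof. by rewrite /w; case: (i.+1 < kstar)%N. Qed.

Lemma sum_gt0 (F : X -> R) : (forall x, 0 < F x) -> 0 < \sum_x F x.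
Proof.
move=> H.
case: (pickP (fun _ : X => true)) => [x0 _|H0].
  rewrite (bigD1 x0) //=; apply: (lt_le_trans (H x0)).
  by rewrite lerDl sumr_ge0 // => x _; apply: ltW.
by move: P0sum; rewrite big_pred0 // => /eqP; rewrite eq_sym oner_eq0.
Qed.

Lemma llr_split D (k1 k2 : nat) : (k1 <= k2)%N ->
  llr P0 P1 D k1 = \sum_(i < n | (k1.-1 <= i < k2.-1)%N) Y (D i) + llr P0 P1 D k2.
Proof.
move=> k12; rewrite /llr (bigID (fun i : 'I_n => (k2 <= i.+1)%N)) /= addrC.
congr (_ + _); apply: eq_bigl => i.
  by apply/idP/idP; [move=> /andP[h1 h2]; lia | move=> h; apply/andP; lia].
by apply/idP/idP; [move=> /andP[h1 h2]; lia | move=> h; apply/andP; lia].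
Qed.


Lemma PR_bound (t : R) : 0 <= t -> \sum_x P1 x * expR (- t * Y x) <= 1 ->
  \sum_D data_prob P0 P1 kstar D * ((kstar + alpha < khat D)%N : bool)%:R <=
  (\sum_x P1 x * expR (- t * Y x)) ^+ alpha.+1.
Proof.
move=> t0; set rho := \sum_x _; move=> r1.
have r0 : 0 < rho by apply: sum_gt0 => x; rewrite mulr_gt0 // expR_gt0.
pose g := fun (i : 'I_n) (x : X) => if (i.+1 < kstar)%N then 1 else expR (- t * Y x) / rho.
have g0 : forall i x, 0 <= g i x.
  move=> i x; rewrite /g; case: ifP => _ //; by rewrite divr_ge0 ?expR_ge0 // ltW.
have g1 : forall i, \sum_x w i x * g i x <= 1.
  move=> i; rewrite /g /w; case: (i.+1 < kstar)%N.
    by under eq_bigr do rewrite mulr1; rewrite P0sum.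
  have -> : \sum_x P1 x * (expR (- t * Y x) / rho) = rho / rho.
    by rewrite /rho mulr_suml; apply: eq_bigr => x _; rewrite mulrA.
  by rewrite divff // gt_eqF.
have cpos : 0 < (rho ^+ alpha.+1)^-1 by rewrite invr_gt0 exprn_gt0.
have V := ville_pre w_ge0 w_sum g0 g1 cpos ler01.
rewrite div1r invrK in V; apply: le_trans V.
apply: ler_sum => D _; rewrite /data_prob; apply: ler_wpM2l.
  by apply: prodr_ge0 => i _; exact: (w_ge0 i (D i)).
apply: ind_le => hR; apply/existsP.
have kn := khat_range D.
have hm : ((khat D).-1 < n.+1)%N by lia.
exists (Ordinal hm); rewrite mul1r /=.
have -> : \prod_(i < n | (i < (khat D).-1)%N) g i (D i) =
          \prod_(i < n | ((kstar.-1) <= i < (khat D).-1)%N) (expR (- t * Y (D i)) / rho).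
  rewrite big_mkcond [RHS]big_mkcond; apply: eq_bigr => i _; rewrite /g.
  case: (ltnP i (khat D).-1) => h1 /=; case: (ltnP i.+1 kstar) => h2 /=;
    rewrite ?andbT ?andbF //; case: ifP => h3 //; exfalso; lia.
apply: win_ge => //; first by rewrite r0 r1.
- lia.
have ks : (1 <= kstar <= n)%N by lia.
have := khat_argmax D ks.
rewrite (@llr_split D kstar (khat D)); last by lia.
rewrite gerDr => S.
by rewrite -mulr_sumr mulNr oppr_ge0 mulr_ge0_le0.
Qed.


Lemma PL_bound (t : R) : 0 <= t -> \sum_x P0 x * expR (t * Y x) <= 1 ->
  \sum_D data_prob P0 P1 kstar D * ((khat D < kstar - alpha)%N : bool)%:R <=
  (\sum_x P0 x * expR (t * Y x)) ^+ alpha.+1.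
Proof.
move=> t0; set rho := \sum_x _; move=> r1.
have r0 : 0 < rho by apply: sum_gt0 => x; rewrite mulr_gt0 // expR_gt0.
pose g := fun (i : 'I_n) (x : X) => if (i.+1 < kstar)%N then expR (t * Y x) / rho else 1.
have g0 : forall i x, 0 <= g i x.
  move=> i x; rewrite /g; case: ifP => _ //; by rewrite divr_ge0 ?expR_ge0 // ltW.
have g1 : forall i, \sum_x w i x * g i x <= 1.
  move=> i; rewrite /g /w; case: (i.+1 < kstar)%N; last first.
    by under eq_bigr do rewrite mulr1; rewrite P1sum.
  have -> : \sum_x P0 x * (expR (t * Y x) / rho) = rho / rho.
    by rewrite /rho mulr_suml; apply: eq_bigr => x _; rewrite mulrA.
  by rewrite divff // gt_eqF.
have cpos : 0 < (rho ^+ alpha.+1)^-1 by rewrite invr_gt0 exprn_gt0.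
have V := ville_suf w_ge0 w_sum g0 g1 cpos ler01.
rewrite div1r invrK in V; apply: le_trans V.
apply: ler_sum => D _; rewrite /data_prob; apply: ler_wpM2l.
  by apply: prodr_ge0 => i _; exact: (w_ge0 i (D i)).
apply: ind_le => hL; apply/existsP.
have kn := khat_range D.
have hm : ((khat D).-1 < n.+1)%N by lia.
exists (Ordinal hm); rewrite mul1r /=.
have -> : \prod_(i < n | ((khat D).-1 <= i)%N) g i (D i) =
          \prod_(i < n | ((khat D).-1 <= i < kstar.-1)%N) (expR (t * Y (D i)) / rho).
  rewrite big_mkcond [RHS]big_mkcond; apply: eq_bigr => i _; rewrite /g.
  case: (leqP (khat D).-1 i) => h1 /=; case: (ltnP i.+1 kstar) => h2 /=;
    rewrite ?andbT ?andbF //; case: ifP => h3 //; exfalso; lia.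
apply: win_ge => //; first by rewrite r0 r1.
- lia.
- lia.
have ks : (1 <= kstar <= n)%N by lia.
have := khat_argmax D ks.
rewrite (@llr_split D (khat D) kstar); last by lia.
rewrite lerDr => S.
by rewrite -mulr_sumr mulr_ge0.
Qed.


Lemma dp_ge0 (D : {ffun 'I_n -> X}) : 0 <= data_prob P0 P1 kstar D.
Proof. by apply: prodr_ge0 => i _; exact: (w_ge0 i (D i)). Qed.

Lemma LHS_split :
  prob_event P0 P1 kstar
    [pred D | ~~ ((kstar - alpha <= khat D)%N && (khat D <= kstar + alpha)%N)] <=
  \sum_D data_prob P0 P1 kstar D * ((khat D < kstar - alpha)%N : bool)%:R +
  \sum_D data_prob P0 P1 kstar D * ((kstar + alpha < khat D)%N : bool)%:R.
Proof.
rewrite /prob_event big_mkcond -big_split; apply: ler_sum => D _ /=.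
rewrite inE negb_and -!ltnNge.
have dp0 := dp_ge0 D.
case: (ltnP (khat D) (kstar - alpha)) => h1; case: (ltnP (kstar + alpha) (khat D)) => h2 /=;
  rewrite ?mulr1 ?mulr0 ?addr0 ?add0r //.
by rewrite lerDl.
Qed.

Lemma pw (a l : R) : 0 < a -> a `^ l = expR (l * ln a).
Proof. by move=> a0; rewrite mulrC expRM lnK // posrE. Qed.

Definition rhoL (l : R) := \sum_x P0 x `^ l * P1 x `^ (1 - l).

Lemma rho_eq1 l : rhoL l = \sum_x P1 x * expR (- l * Y x).
Proof.
apply: eq_bigr => x _.
have -> : P1 x * expR (- l * Y x) = expR (ln (P1 x) + - l * Y x) by rewrite expRD lnK // posrE.
rewrite !pw // -expRD /Y ln_div ?posrE //; congr expR; ring.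
Qed.

Lemma rho_eq0 l : rhoL l = \sum_x P0 x * expR ((1 - l) * Y x).
Proof.
apply: eq_bigr => x _.
have -> : P0 x * expR ((1 - l) * Y x) = expR (ln (P0 x) + (1 - l) * Y x) by rewrite expRD lnK // posrE.
rewrite !pw // -expRD /Y ln_div ?posrE //; congr expR; ring.
Qed.

Lemma rho1_le1 l : 0 <= l <= 1 -> \sum_x P1 x * expR (- l * Y x) <= 1.
Proof.
move=> l01; rewrite -P1sum; apply: (@le_trans _ _ (\sum_x (l * P0 x + (1 - l) * P1 x))).
  apply: ler_sum => x _.
  have := expR_conv (- Y x) 0 l01.
  rewrite mulr0 addr0 expR0 mulr1 mulrN -mulNr => H.
  have p1 := P1pos x.
  apply: (le_trans (ler_wpM2l (ltW p1) H)).
  rewrite expRN /Y lnK ?posrE ?divr_gt0 // invf_div.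
  apply: eq_leR; field; exact: lt0r_neq0.
rewrite big_split /= -!mulr_sumr P0sum P1sum; apply: eq_leR; ring.
Qed.


Lemma KL_ge0 (P Q : X -> R) : (forall x, 0 < P x) -> (forall x, 0 < Q x) ->
  \sum_x P x = 1 -> \sum_x Q x = 1 -> 0 <= KL P Q.
Proof.
move=> Pp Qp Ps Qs; rewrite /KL.
apply: (@le_trans _ _ (\sum_x (P x - Q x))).
  by rewrite sumrB Ps Qs subrr.
apply: ler_sum => x _.
have px := Pp x; have qx := Qp x.
have H : ln (Q x / P x) <= Q x / P x - 1.
  have := @le_ln1Dx R (Q x / P x - 1); rewrite addrCA subrr addr0; apply.
  by rewrite ltrBrDr addrC subrr divr_gt0.
have -> : ln (P x / Q x) = - ln (Q x / P x).
  by rewrite -lnV ?posrE ?divr_gt0 // invf_div.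
have := ler_wpM2l (ltW px) H.
have -> : P x * (Q x / P x - 1) = Q x - P x by field; exact: lt0r_neq0.
move=> H2; rewrite mulrN; lra.
Qed.

Lemma Y_le x : Y x <= Dinf P1 P0.
Proof.
rewrite /Y /Dinf ler_ln ?posrE ?divr_gt0 //.
  exact: (le_bigmax 0 (fun x => P1 x / P0 x) x).
apply: (lt_le_trans _ (le_bigmax 0 (fun x => P1 x / P0 x) x)); exact: divr_gt0.
Qed.

Lemma Y_ge x : - Dinf P0 P1 <= Y x.
Proof.
rewrite lerNl /Y -lnV ?posrE ?divr_gt0 // invf_div /Dinf ler_ln ?posrE ?divr_gt0 //.
  exact: (le_bigmax 0 (fun x => P0 x / P1 x) x).
apply: (lt_le_trans _ (le_bigmax 0 (fun x => P0 x / P1 x) x)); exact: divr_gt0.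
Qed.

Lemma hoeff_apply (Q f : X -> R) (a b mu : R) :
  (forall x, 0 < Q x) -> \sum_x Q x = 1 -> (forall x, a <= f x <= b) -> a < b ->
  \sum_x Q x * f x = - mu ->
  \sum_x Q x * expR ((4 * mu / (b - a) ^+ 2) * f x) <= expR (- (2 * mu ^+ 2) / (b - a) ^+ 2).
Proof.
move=> Qp Qs fab ab Qf.
have := hoeffding (4 * mu / (b - a) ^+ 2) (fun x => ltW (Qp x)) Qs fab ab.
rewrite Qf => H; apply: (le_trans H); apply: eq_leR; congr expR.
have : b - a != 0 by rewrite subr_eq0 gt_eqF.
move=> h; field; exact: h.
Qed.

Lemma tail_bound (rho mu C s : R) : 0 < rho -> rho <= expR (- (2 * mu ^+ 2) / s ^+ 2) ->
  0 <= C -> C <= mu -> s != 0 ->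
  rho ^+ alpha.+1 <= expR (- (alpha%:R * C ^+ 2) / s ^+ 2).
Proof.
move=> r0 rle C0 Cmu s0.
apply: (@le_trans _ _ (expR (- (2 * mu ^+ 2) / s ^+ 2) ^+ alpha.+1)).
  by apply: lerXn2r => //; rewrite nnegrE ?expR_ge0 // ltW.
rewrite -expRM_natl ler_expR.
have s2 : 0 < s ^+ 2 by rewrite exprn_even_gt0.
have -> : alpha.+1%:R * (- (2 * mu ^+ 2) / s ^+ 2) = (- (alpha.+1%:R * 2 * mu^+2)) * (s^+2)^-1 by ring.
apply: ler_wpM2r; first by rewrite invr_ge0 ltW.
have a0 : 0 <= alpha%:R :> R by [].
have h1 : C ^+ 2 <= mu ^+ 2 by rewrite lerXn2r // nnegrE (le_trans C0).
rewrite -natr1 lerN2.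
have h2 : 0 <= mu ^+ 2 by rewrite sqr_ge0.
nra.
Qed.

Lemma min2 (L A B : R) : L <= 2 * A -> L <= 2 * B -> L <= 2 * Num.min A B.
Proof.
by move=> hA hB; rewrite /Num.Def.minr; case: ltP.
Qed.


Hypothesis hn : (1 < n)%N.
Hypothesis ha : (1 <= alpha <= n)%N.

Let LHS := prob_event P0 P1 kstar
    [pred D | ~~ ((kstar - alpha <= khat D)%N && (khat D <= kstar + alpha)%N)].

Lemma LHS_ge0 : 0 <= LHS.
Proof. by apply: sumr_ge0 => D _; exact: dp_ge0. Qed.

Lemma chernoff_part : LHS <= 2 * expR (- (alpha%:R * chernoff_info P0 P1)).
Proof.
have HC : forall l, 0 < l < 1 -> LHS <= 2 * expR (alpha%:R * ln (rhoL l)).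
  move=> l /andP[l0 l1].
  have r1 : \sum_x P1 x * expR (- l * Y x) <= 1 by apply: rho1_le1; rewrite !ltW.
  have rp : 0 < rhoL l by rewrite rho_eq1; apply: sum_gt0 => x; rewrite mulr_gt0 // expR_gt0.
  have rl1 : rhoL l <= 1 by rewrite rho_eq1.
  apply: (le_trans LHS_split).
  have hR := PR_bound (ltW l0) r1.
  have l1' : 0 <= 1 - l by rewrite subr_ge0 ltW.
  have r0' : \sum_x P0 x * expR ((1 - l) * Y x) <= 1 by rewrite -rho_eq0.
  have hL := PL_bound l1' r0'.
  rewrite -rho_eq1 in hR; rewrite -rho_eq0 in hL.
  rewrite expRM_natl lnK ?posrE // mulr2n mulrDl mul1r.
  have hp : rhoL l ^+ alpha.+1 <= rhoL l ^+ alpha.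
    by rewrite exprSr ler_piMr // exprn_ge0 // ltW.
  apply: lerD; [exact: le_trans hL hp | exact: le_trans hR hp].
have [L0|Lp] := eqVneq LHS 0.
  by rewrite L0 mulr_ge0 // expR_ge0.
have Lpos : 0 < LHS by rewrite lt_def Lp LHS_ge0.
have a0 : 0 < alpha%:R :> R by rewrite ltr0n; case/andP: ha.
set v := - ln (LHS / 2) / alpha%:R.
have ub : ubound [set - ln (\sum_x (P0 x `^ lam) * (P1 x `^ (1 - lam))) | lam in `]0, 1[] v.
  move=> e [l hl <-].
  have hl' : 0 < l < 1 by move: hl; rewrite /= in_itv.
  have := HC l hl'.
  rewrite -ler_pdivrMl // ?ltr0n // mulrC -ler_ln ?posrE ?divr_gt0 ?expR_gt0 // expRK.
  move=> H; rewrite /v ler_pdivlMr // mulrC mulrN lerNr opprK.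
  exact: H.
have ne : ([set - ln (\sum_x (P0 x `^ lam) * (P1 x `^ (1 - lam))) | lam in `]0, 1[] !=set0)%classic.
  exists (- ln (rhoL (1/2))); exists (1/2) => //.
  by rewrite /= in_itv /=; apply/andP; split; lra.
have := ge_sup ne ub; rewrite -/(chernoff_info P0 P1) => hI.
rewrite -ler_pdivrMl // ?ltr0n //.
have -> : 2^-1 * LHS = expR (- (alpha%:R * v)).
  have -> : - (alpha%:R * v) = ln (LHS / 2) by rewrite /v; field; rewrite gt_eqF.
  by rewrite lnK ?posrE ?divr_gt0 // mulrC.
by rewrite ler_expR lerN2 ler_wpM2l // ltW.
Qed.


Lemma exists_x : exists x : X, true.
Proof.
case: (pickP (fun _ : X => true)) => [x0 _|H0]; first by exists x0.
by move: P0sum; rewrite big_pred0 // => /eqP; rewrite eq_sym oner_eq0.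
Qed.

Lemma hoeff_part : LHS <= 2 * expR (- (alpha%:R * (Num.min (KL P0 P1) (KL P1 P0)) ^+ 2) / (DJinf P0 P1) ^+ 2).
Proof.
set s := DJinf P0 P1; set C := Num.min _ _.
have K0 : 0 <= KL P0 P1 by apply: KL_ge0.
have K1 : 0 <= KL P1 P0 by apply: KL_ge0.
have C0 : 0 <= C by rewrite /C /Num.Def.minr; case: ltP.
have CK0 : C <= KL P0 P1 by rewrite /C /Num.Def.minr; case: ltP => // h; rewrite ltW.
have CK1 : C <= KL P1 P0 by rewrite /C /Num.Def.minr; case: ltP => h //; exact: ltW h.
have hS := LHS_split.
apply: (le_trans hS).
have [s0|sn0] := eqVneq s 0.
  rewrite s0 expr0n /= invr0 mulr0 expR0 mulr1.
  have e0 : \sum_x P0 x * expR (0 * Y x) = 1.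
    by under eq_bigr do rewrite mul0r expR0 mulr1; exact: P0sum.
  have e1 : \sum_x P1 x * expR (- 0 * Y x) = 1.
    by under eq_bigr do rewrite oppr0 mul0r expR0 mulr1; exact: P1sum.
  have h1 := PL_bound (lexx 0) (eq_leR e0).
  have h2 := PR_bound (lexx 0) (eq_leR e1).
  rewrite e0 expr1n in h1; rewrite e1 expr1n in h2.
  lra.
set a := - Dinf P0 P1; set b := Dinf P1 P0.
have sba : s = b - a by rewrite /s /DJinf /a /b opprK addrC.
have fab : forall x, a <= Y x <= b by move=> x; rewrite Y_ge Y_le.
have ab : a < b.
  have [x0 _] := exists_x.
  have /andP[h1 h2] := fab x0.
  rewrite lt_def (le_trans h1 h2) andbT; apply: contra sn0 => /eqP ba.
  by rewrite sba ba subrr.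
have mu0 : \sum_x P0 x * Y x = - KL P0 P1.
  rewrite /KL -sumrN; apply: eq_bigr => x _.
  by rewrite /Y -mulrN -lnV ?posrE ?divr_gt0 // invf_div.
have HL := hoeff_apply P0pos P0sum fab ab mu0.
rewrite -sba in HL.
have q0 : expR (- (2 * KL P0 P1 ^+ 2) / s ^+ 2) <= 1.
  rewrite expR_le1 mulNr oppr_le0; apply: divr_ge0; [apply: mulr_ge0 => //; exact: sqr_ge0 | exact: sqr_ge0].
have t0 : 0 <= 4 * KL P0 P1 / s ^+ 2 by apply: divr_ge0; [exact: mulr_ge0 | exact: sqr_ge0].
have PL := PL_bound t0 (le_trans HL q0).
have r0 : 0 < \sum_x P0 x * expR (4 * KL P0 P1 / s ^+ 2 * Y x).
  by apply: sum_gt0 => x; rewrite mulr_gt0 // expR_gt0.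
have TL := tail_bound r0 HL C0 CK0 sn0.
have fab' : forall x, - b <= - Y x <= - a by move=> x; rewrite !lerN2 andbC fab.
have mu1 : \sum_x P1 x * (- Y x) = - KL P1 P0.
  by rewrite /KL -sumrN; apply: eq_bigr => x _; rewrite mulrN.
have ab' : - b < - a by rewrite ltrN2.
have HR := hoeff_apply P1pos P1sum fab' ab' mu1.
rewrite (_ : - a - - b = b - a) in HR; last by ring.
have eR : \sum_x P1 x * expR (4 * KL P1 P0 / s ^+ 2 * - Y x) =
          \sum_x P1 x * expR (- (4 * KL P1 P0 / s ^+ 2) * Y x).
  by apply: eq_bigr => x _; rewrite mulrN mulNr.
rewrite -sba in HR.
rewrite eR in HR.
have q1 : expR (- (2 * KL P1 P0 ^+ 2) / s ^+ 2) <= 1.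
  rewrite expR_le1 mulNr oppr_le0; apply: divr_ge0; [apply: mulr_ge0 => //; exact: sqr_ge0 | exact: sqr_ge0].
have t1 : 0 <= 4 * KL P1 P0 / s ^+ 2 by apply: divr_ge0; [exact: mulr_ge0 | exact: sqr_ge0].
have PR := PR_bound t1 (le_trans HR q1).
have r1 : 0 < \sum_x P1 x * expR (- (4 * KL P1 P0 / s ^+ 2) * Y x).
  by apply: sum_gt0 => x; rewrite mulr_gt0 // expR_gt0.
have TR := tail_bound r1 HR C0 CK1 sn0.
have := le_trans PL TL; have := le_trans PR TR.
lra.
Qed.


Lemma main_res :
  let s := DJinf P0 P1 in
  let C := Num.min (KL P0 P1) (KL P1 P0) in
  let istar : int := Num.ceil (ln ((n%:R - 1) / alpha%:R : R) / ln (2 : R)) in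
  prob_event P0 P1 kstar
    [pred D | ~~ ((kstar - alpha <= khat D)%N && (khat D <= kstar + alpha)%N)]
  <= 2 * Num.min
       (\sum_(1 <= i < (absz istar).+1 | (i%:Z <= istar))
          expR (- (2 ^+ i.-1 * alpha%:R * C ^+ 2) / s ^+ 2))
       (expR (- (alpha%:R * chernoff_info P0 P1))).
Proof.
cbv zeta.
set s := DJinf P0 P1. set C := Num.min (KL P0 P1) (KL P1 P0).
set istar := Num.ceil _.
change (LHS <= 2 * Num.min (\sum_(1 <= i < (absz istar).+1 | (i%:Z <= istar))
          expR (- (2 ^+ i.-1 * alpha%:R * C ^+ 2) / s ^+ 2))
       (expR (- (alpha%:R * chernoff_info P0 P1)))).
have A0 : 0 <= \sum_(1 <= i < (absz istar).+1 | (i%:Z <= istar))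
          expR (- (2 ^+ i.-1 * alpha%:R * C ^+ 2) / s ^+ 2).
  by apply: sumr_ge0 => i _; exact: expR_ge0.
have [small|big] := leqP n.-1 alpha.
  have L0 : LHS = 0.
    rewrite /LHS /prob_event big1 // => D; rewrite inE negb_and -!ltnNge => /orP[h|h];
    have := khat_range D; lia.
  by rewrite L0; apply: min2; rewrite mulr_ge0 // expR_ge0.
apply: min2; last exact: chernoff_part.
apply: (le_trans hoeff_part); rewrite ler_pM2l //.
have a0 : 0 < alpha%:R :> R by rewrite ltr0n; case/andP: ha.
have ip : 0 < istar.
  rewrite /istar ceil_gt0 divr_gt0 // ln_gt0 //; last lra.
  rewrite ltr_pdivlMr // mul1r.
  have : alpha%:R + 1 < n%:R :> R by rewrite natr1 ltr_nat; lia.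
  lra.
have ai : (0 < absz istar)%N by rewrite absz_gt0 gt_eqF.
rewrite big_ltn_cond // ifT; last by lia.
rewrite /= expr0 mul1r lerDl; apply: sumr_ge0 => i _; exact: expR_ge0.
Qed.

End Main.

Unset Implicit Arguments.
Set Strict Implicit.

Theorem theorem3p1 (R : realType) (X : finType) (P0 P1 : X -> R)
  (P0pos : forall x, 0 < P0 x) (P1pos : forall x, 0 < P1 x)
  (P0sum : \sum_(x : X) P0 x = 1) (P1sum : \sum_(x : X) P1 x = 1)
  (n kstar alpha : nat) (hn : (1 < n)%N) (hk : (1 < kstar <= n)%N)
  (ha : (1 <= alpha <= n)%N)
  (khat : {ffun 'I_n -> X} -> nat)
  (khat_range : forall D, (1 <= khat D <= n)%N)
  (khat_argmax : forall D (k : nat), (1 <= k <= n)%N ->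
      llr P0 P1 D k <= llr P0 P1 D (khat D)) :
  let s := DJinf P0 P1 in
  let C := Num.min (KL P0 P1) (KL P1 P0) in
  let istar : int := Num.ceil (ln ((n%:R - 1) / alpha%:R : R) / ln (2 : R)) in
  prob_event P0 P1 kstar
    [pred D | ~~ ((kstar - alpha <= khat D)%N && (khat D <= kstar + alpha)%N)]
  <= 2 * Num.min
       (\sum_(1 <= i < (absz istar).+1 | (i%:Z <= istar))
          expR (- (2 ^+ i.-1 * alpha%:R * C ^+ 2) / s ^+ 2))
       (expR (- (alpha%:R * chernoff_info P0 P1))).
Proof.
exact: (@main_res R X P0 P1 P0pos P1pos P0sum P1sum n kstar alpha hk khat khat_range khat_argmax hn ha).
Qed.
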